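(* Let $D_1,\dots,D_n$ be semi-interlaced polytopes in a finite set $\mathbf P\subset\mathbb Z^n$ with $P=\operatorname{Conv}\mathbf P$. Let $S_1,S_2$ be sutures such that $S_1\cap S_2\neq\emptyset$ and $\operatorname{aff}(S_1\cap S_2)=\operatorname{aff}(S_1)\cap\operatorname{aff}(S_2)$. Then both $S_1\cap S_2$ and $P\cap\operatorname{aff}(S_1\cup S_2)$ are sutures.
   Context: **Daughter polytope.** For a nonempty polytope $D$ with vertices in $\mathbf P$, $\mathcal D(D)$ is the set of inclusion-maximal faces of $P$ disjoint from $D$. $D$ is a daughter polytope of $\mathbf P$ if: 1. distinct members of $\mathcal D(D)$ are disjoint; 2. $D=\operatorname{Conv}(\mathbf P\setminus\bigcup_{F\in\mathcal D(D)}F)$. **Semi-interlaced and sutures.** Daughter polytopes $D_1,\dots,D_n$ of $\mathbf P\subset\mathbb Z^n$ are semi-interlaced in $\mathbf P$ if every face $F$ of $P$ meets at least $\dim F$ of them. A face of $P$ meeting exactly $\dim F$ of them is called a suture. *)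

(* Defs.v *)
From HB Require Import structures.
From mathcomp Require Import all_boot all_order all_algebra.
From mathcomp Require Import boolp classical_sets reals.
Set Implicit Arguments. Unset Strict Implicit. Unset Printing Implicit Defensive.
Import Order.TTheory GRing.Theory Num.Theory.
Local Open Scope ring_scope.
Local Open Scope classical_set_scope.

Section Polytopes.
Variables (R : realType) (n : nat).
Local Notation V := 'rV[R]_n.

Definition dotp (x y : V) : R := \sum_(j < n) x 0 j * y 0 j.

Definition conv (A : set V) : set V := fun x =>
  exists (m : nat) (p : 'I_m -> V) (w : 'I_m -> R),
    (forall i, A (p i)) /\ (forall i, 0 <= w i) /\
    \sum_(i < m) w i = 1 /\ x = \sum_(i < m) w i *: p i.

Definition aff (A : set V) : set V := fun x =>
  exists (m : nat) (p : 'I_m -> V) (w : 'I_m -> R),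
    (forall i, A (p i)) /\
    \sum_(i < m) w i = 1 /\ x = \sum_(i < m) w i *: p i.

Definition aff_indep (m : nat) (p : 'I_m.+1 -> V) : Prop :=
  \rank (\matrix_(i < m, j < n) (p (lift ord0 i) 0 j - p ord0 0 j)) = m.

Definition has_dim (A : set V) (k : nat) : Prop :=
  (exists p : 'I_k.+1 -> V, (forall i, A (p i)) /\ aff_indep p) /\
  (forall (m : nat) (p : 'I_m.+1 -> V),
      (forall i, A (p i)) -> aff_indep p -> (m <= k)%N).

(* F is a face of the convex set P (defined by a valid linear inequality;
   includes the empty face and P itself) *)
Definition face (P F : set V) : Prop :=
  exists (c : V) (d : R),
    (forall x, P x -> dotp c x <= d) /\
    F = [set x | P x /\ dotp c x = d].

Definition maxdisj (P D F : set V) : Prop :=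
  face P F /\ F `&` D = set0 /\
  (forall G, face P G -> G `&` D = set0 -> F `<=` G -> G = F).

Definition daughter (Pts D : set V) : Prop :=
  let P := conv Pts in
  (exists Q, Q `<=` Pts /\ D = conv Q) /\ D !=set0 /\
  (forall F G, maxdisj P D F -> maxdisj P D G -> F <> G -> F `&` G = set0) /\
  D = conv [set p | Pts p /\ forall F, maxdisj P D F -> ~ F p].

Definition meets_exactly (D : 'I_n -> set V) (F : set V) (I : {set 'I_n}) :=
  forall i, i \in I <-> D i `&` F !=set0.

Definition semi_interlaced (Pts : set V) (D : 'I_n -> set V) : Prop :=
  (forall i, daughter Pts (D i)) /\
  (forall F k I, face (conv Pts) F -> F !=set0 -> has_dim F k ->
     meets_exactly D F I -> (k <= #|I|)%N).

(* a suture: a (nonempty) face F meeting exactly dim F of the D_i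
   (the empty face, of dimension -1, is never a suture) *)
Definition suture (Pts : set V) (D : 'I_n -> set V) (F : set V) : Prop :=
  face (conv Pts) F /\ F !=set0 /\
  exists k I, has_dim F k /\ meets_exactly D F I /\ #|I| = k.

End Polytopes.

Definition intpt (R : realType) (n : nat) (z : 'rV[int]_n) : 'rV[R]_n :=
  map_mx (fun a : int => a%:~R) z.

(* Main.v *)
Require Import Defs.
From HB Require Import structures.
From mathcomp Require Import all_boot all_order all_algebra.
From mathcomp Require Import boolp classical_sets reals.
From mathcomp Require Import zify.
Import Order.TTheory GRing.Theory Num.Theory.
Local Open Scope ring_scope.
Local Open Scope classical_set_scope.
Set Implicit Arguments. Unset Strict Implicit. Unset Printing Implicit Defensive.

Section LinAlg.
Variables (R : realType) (n : nat).
Local Notation V := 'rV[R]_n.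

Definition Mp m (p : 'I_m.+1 -> V) : 'M[R]_(m, n) :=
  \matrix_(i < m, j < n) (p (lift ord0 i) 0 j - p ord0 0 j).

Lemma rowMp m (p : 'I_m.+1 -> V) i : row i (Mp p) = p (lift ord0 i) - p ord0.
Proof. by apply/rowP => j; rewrite !mxE. Qed.

Lemma sub_sub_base (k : nat) (B : 'M[R]_(k, n)) (o x y : V) :
  (x - o <= B)%MS -> (y - o <= B)%MS -> (x - y <= B)%MS.
Proof.
move=> hx hy.
have -> : x - y = (x - o) + (-1) *: (y - o) by rewrite scaleN1r opprB addrA subrK.
by apply: addmx_sub => //; apply: scalemx_sub.
Qed.

Definition pext m (p : 'I_m.+1 -> V) (x : V) : 'I_m.+2 -> V :=
  fun i => if (i < m.+1)%N then p (inord i) else x.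

Lemma ext_indep m (p : 'I_m.+1 -> V) (x : V) :
  aff_indep p -> ~~ (x - p ord0 <= Mp p)%MS -> aff_indep (pext p x).
Proof.
rewrite /aff_indep -/(Mp p) -/(Mp (pext p x)) => hp hx.
set A := Mp p; set B := x - p ord0.
have hB0 : B != 0 by apply/eqP => hB; move: hx; rewrite -/B hB sub0mx.
have rB : \rank B = 1%N by rewrite rank_rV hB0.
have rcap : \rank (A :&: B)%MS = 0%N.
  have := mxrank_leqif_sup (capmxSr A B); rewrite rB => -[le1 eqC].
  case E: (\rank (A :&: B)%MS) => [//|k].
  have k0 : k = 0%N by move: le1; rewrite E; case: k {E}.
  subst k; move: eqC; rewrite E eqxx => /esym hBs.
  by move: hx; rewrite -/B (submx_trans hBs (capmxSl A B)).
have rsum := mxrank_sum_cap A B.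
rewrite rcap hp rB addn0 addn1 in rsum.
have p0e : pext p x ord0 = p ord0.
  by rewrite /pext /= (_ : inord 0 = ord0) //; apply: val_inj; rewrite /= inordK.
have sub : ((A + B)%MS <= Mp (pext p x))%MS.
  rewrite addsmx_sub; apply/andP; split.
    apply/row_subP => i; rewrite /A rowMp.
    have -> : p (lift ord0 i) - p ord0 = row (widen_ord (leqnSn m) i) (Mp (pext p x)).
      rewrite rowMp p0e /pext /= ltnS ltn_ord; congr (p _ - _).
      by apply: val_inj; rewrite /= inordK // ltnS ltn_ord.
    by apply: row_sub.
  have -> : B = row ord_max (Mp (pext p x)).
    by rewrite rowMp p0e /pext /= ltnn.
  by apply: row_sub.
apply/eqP; rewrite eqn_leq rank_leq_row /=.
by apply: leq_trans (mxrankS sub); rewrite rsum.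
Qed.

Lemma dimchar (A : set V) k : has_dim A k ->
  exists p : 'I_k.+1 -> V, (forall i, A (p i)) /\ aff_indep p /\
    forall x, A x -> (x - p ord0 <= Mp p)%MS.
Proof.
move=> [[p [hpA hp]] hub]; exists p; split=> //; split=> // x hx.
case E: (x - p ord0 <= Mp p)%MS => //.
have := hub _ (pext p x); rewrite ltnn; apply.
  by move=> i; rewrite /pext; case: ifP.
by apply: ext_indep => //; rewrite E.
Qed.

Lemma row_aff (A : set V) m (p : 'I_m.+1 -> V) x :
  (forall i, A (p i)) -> (x - p ord0 <= Mp p)%MS -> aff A x.
Proof.
move=> hA /submxP [w hw].
rewrite mulmx_sum_row in hw.
exists m.+1, p, (fun i => if unlift ord0 i is Some j then w 0 j else 1 - \sum_j w 0 j).
split=> //; split.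
  rewrite big_ord_recl unlift_none.
  rewrite [X in _ + X = _](_ : _ = \sum_(i < m) w 0 i) ?subrK //.
  by apply: eq_bigr => i _; rewrite liftK.
rewrite big_ord_recl unlift_none.
rewrite [X in _ = _ + X](_ : _ = \sum_(i < m) w 0 i *: p (lift ord0 i)); last first.
  by apply: eq_bigr => i _; rewrite liftK.
move: hw; under eq_bigr do rewrite rowMp scalerBr.
rewrite sumrB -scaler_suml => hw.
move/eqP: hw; rewrite subr_eq => /eqP ->.
by rewrite scalerBl scale1r [LHS]addrC -[RHS]addrA [- _ + _]addrC.
Qed.

Lemma aff_row (A : set V) k (B : 'M[R]_(k, n)) o x :
  (forall a, A a -> (a - o <= B)%MS) -> aff A x -> (x - o <= B)%MS.
Proof.
move=> hA [m [p [w [hp [hw ->]]]]].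
have -> : \sum_(i < m) w i *: p i - o = \sum_(i < m) w i *: (p i - o).
  by under [RHS]eq_bigr do rewrite scalerBr; rewrite sumrB -scaler_suml hw scale1r.
by apply: summx_sub => i _; apply: scalemx_sub; apply: hA.
Qed.


Lemma exmax (Q : nat -> Prop) m : (exists i, Q i) -> (forall i, Q i -> (i <= m)%N) ->
  exists k, Q k /\ forall i, Q i -> (i <= k)%N.
Proof.
move=> [i0 hi0] hub.
have e : exists i, `[< Q i >] by exists i0; apply/asboolP.
have ub : forall i, `[< Q i >] -> (i <= m)%N by move=> i /asboolP; apply: hub.
case: (ex_maxnP e ub) => k /asboolP hk hmax.
by exists k; split => // i hi; apply: hmax; apply/asboolP.
Qed.

Lemma dim_exists (A : set V) : A !=set0 -> exists k, has_dim A k.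
Proof.
move=> [a ha].
case: (@exmax (fun k => exists p : 'I_k.+1 -> V, (forall i, A (p i)) /\ aff_indep p) n).
- exists 0%N, (fun _ => a); split => //.
  by rewrite /aff_indep; apply/eqP; rewrite -leqn0 rank_leq_row.
- move=> i [p [_ hp]]; move: hp; rewrite /aff_indep => <-; exact: rank_leq_col.
move=> k [hk hmax]; exists k; split => // m p hp hi; apply: hmax; by exists p.
Qed.

Lemma has_dim_mono (A B : set V) a b : A `<=` B -> has_dim A a -> has_dim B b -> (a <= b)%N.
Proof.
move=> AB [[p [hp hi]] _] [_ hub]; apply: hub hi => i; apply: AB; exact: hp.
Qed.

Lemma dimchar2 (A : set V) k : has_dim A k ->
  exists p : 'I_k.+1 -> V, (forall i, A (p i)) /\ aff_indep p /\
    forall x o, A x -> A o -> (x - o <= Mp p)%MS.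
Proof.
move=> /dimchar [p [hA [hi hs]]]; exists p; do 2 split => //.
move=> x o hx ho; exact: (sub_sub_base (hs _ hx) (hs _ ho)).
Qed.

Lemma dim_union (S1 S2 : set V) d1 d2 s u :
  has_dim S1 d1 -> has_dim S2 d2 -> has_dim (S1 `&` S2) s -> has_dim (S1 `|` S2) u ->
  S1 `&` S2 !=set0 -> aff (S1 `&` S2) = aff S1 `&` aff S2 -> (d1 + d2 <= u + s)%N.
Proof.
move=> /dimchar2 [p1 [h1 [i1 s1]]] /dimchar2 [p2 [h2 [i2 s2]]].
move=> /dimchar2 [p0 [h0 [i0 s0]]] /dimchar2 [q [hq [iq sq]]] [o [o1 o2]] haff.
set U1 := Mp p1; set U2 := Mp p2.
have capS : ((U1 :&: U2)%MS <= Mp p0)%MS.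
  apply/row_subP => i; set v := row i _.
  have : (v <= U1 :&: U2)%MS by apply: row_sub.
  rewrite sub_capmx => /andP [v1 v2].
  have a1 : aff S1 (o + v).
    apply: (row_aff h1); rewrite addrAC; apply: addmx_sub => //.
    exact: s1 (o1) (h1 ord0).
  have a2 : aff S2 (o + v).
    apply: (row_aff h2); rewrite addrAC; apply: addmx_sub => //.
    exact: s2 (o2) (h2 ord0).
  have : aff (S1 `&` S2) (o + v) by rewrite haff.
  move/(aff_row (o := p0 ord0) (B := Mp p0)) => hv.
  have := hv (fun a ha => s0 a (p0 ord0) ha (h0 ord0)).
  have ho : (o - p0 ord0 <= Mp p0)%MS by apply: s0 => //; split.
  move=> h; have := sub_sub_base h ho.
  by rewrite addrAC subrr add0r.
have sQ : ((U1 + U2)%MS <= Mp q)%MS.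
  rewrite addsmx_sub; apply/andP; split; apply/row_subP => i; rewrite rowMp.
    by apply: sq; [left; apply: h1 | left; apply: h1].
  by apply: sq; [right; apply: h2 | right; apply: h2].
have := mxrank_sum_cap U1 U2.
have r1 : \rank U1 = d1 := i1. have r2 : \rank U2 = d2 := i2.
have rq : \rank (Mp q) = u := iq. have r0 : \rank (Mp p0) = s := i0.
rewrite r1 r2 => <-; rewrite -rq -r0.
by apply: leq_add; apply: mxrankS.
Qed.


Lemma dotp_sumr (c : V) m (f : 'I_m -> V) : dotp c (\sum_(i < m) f i) = \sum_(i < m) dotp c (f i).
Proof.
rewrite /dotp; under eq_bigr do rewrite summxE mulr_sumr.
by rewrite exchange_big.
Qed.

Lemma dotpZr (c : V) a x : dotp c (a *: x) = a * dotp c x.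
Proof. by rewrite /dotp mulr_sumr; apply: eq_bigr => j _; rewrite mxE mulrCA. Qed.

Lemma dotp_suml (I : finType) (Z : pred I) (c : I -> V) x :
  dotp (\sum_(i | Z i) c i) x = \sum_(i | Z i) dotp (c i) x.
Proof.
rewrite /dotp; under eq_bigr do rewrite summxE mulr_suml.
by rewrite exchange_big.
Qed.

Lemma face_cap (P : set V) (I : finType) (Z : pred I) (c : I -> V) (d : I -> R) :
  (forall i, Z i -> forall x, P x -> dotp (c i) x <= d i) ->
  face P [set x | P x /\ forall i, Z i -> dotp (c i) x = d i].
Proof.
move=> hv; exists (\sum_(i | Z i) c i), (\sum_(i | Z i) d i); split.
  by move=> x hx; rewrite dotp_suml; apply: ler_sum => i hi; apply: hv.
apply/seteqP; split => x /= [hx h]; split => //.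
  by rewrite dotp_suml; apply: eq_bigr.
move=> i hi.
have h0 : forall i, Z i -> 0 <= d i - dotp (c i) x.
  by move=> j hj; rewrite subr_ge0; exact: hv j hj x hx.
have := psumr_eq0P h0.
rewrite sumrB -dotp_suml h subrr => /(_ erefl i hi) /eqP.
by rewrite subr_eq0 => /eqP.
Qed.

Lemma pts_conv (A : set V) x : A x -> conv A x.
Proof.
move=> hx; exists 1%N, (fun _ => x), (fun _ => 1); do !split => //.
  by rewrite big_ord1.
by rewrite big_ord1 scale1r.
Qed.

Lemma conv_mono (A B : set V) : A `<=` B -> conv A `<=` conv B.
Proof. by move=> AB x [m [p [w [hp hw]]]]; exists m, p, w; split => // i; apply: AB. Qed.

Lemma face_pts_sub (Pts F : set V) : face (conv Pts) F ->
  conv [set p | Pts p /\ F p] `<=` F.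
Proof.
move=> [c [d [hv ->]]] x hx; split.
  by apply: (conv_mono _ hx) => p [].
case: hx => m [p [w [hp [hw0 [hw1 ->]]]]].
rewrite dotp_sumr; under eq_bigr => i _ do rewrite dotpZr (proj2 (proj2 (hp i))).
by rewrite -mulr_suml hw1 mul1r.
Qed.

Lemma face_sub_pts (Pts F : set V) : face (conv Pts) F ->
  F `<=` conv [set p | Pts p /\ F p].
Proof.
move=> hF; have [c [d [hv eF]]] := hF; move=> x hx.
have := hx; rewrite eF => -[[m [p [w [hp [hw0 [hw1 ex]]]]]] hcx].
have hterm : forall i, w i * (d - dotp c (p i)) = 0.
  have h0 : forall i, true -> 0 <= w i * (d - dotp c (p i)).
    by move=> i _; apply: mulr_ge0 => //; rewrite subr_ge0; apply: hv; apply: pts_conv.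
  have hsum : \sum_(i < m) w i * (d - dotp c (p i)) = 0.
    under eq_bigr do rewrite mulrBr.
    rewrite sumrB -mulr_suml hw1 mul1r.
    by rewrite -hcx ex dotp_sumr; under eq_bigr do rewrite dotpZr; rewrite subrr.
  by move=> i; apply: (psumr_eq0P h0 hsum).
have [i0 /andP [_ hi0]] : exists i, true && (0 < w i).
  by apply: psumr_neq0P => //; rewrite hw1; apply/eqP; rewrite oner_neq0.
have pF : forall i, w i != 0 -> F (p i).
  move=> i hi; rewrite eF; split; first by apply: pts_conv.
  have := hterm i; move/eqP; rewrite mulf_eq0 (negbTE hi) /= subr_eq0 => /eqP.
  by move=> ->.
exists m, (fun i => if w i == 0 then p i0 else p i), w; split; last split => //.
  move=> i; case: ifP => [_|/negbT hi]; split => //; rewrite -eF; apply: pF => //.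
  by rewrite lt0r_neq0.
split => //; rewrite ex; apply: eq_bigr => i _.
by case: ifP => // /eqP ->; rewrite !scale0r.
Qed.

Lemma count_eq_sub (T : eqType) (a b : pred T) (s : seq T) :
  (forall x, a x -> b x) -> count a s = count b s -> forall x, x \in s -> b x -> a x.
Proof.
move=> ab; elim: s => [//|y s IH] /= e x.
have c1 := sub_count ab s.
rewrite inE => /orP [/eqP -> hb|xs hb].
  case ay: (a y) => //; move: e; rewrite ay hb /=; lia.
apply: IH => //; move: e; case ay: (a y); case by_: (b y) => //=.
- lia.
- by rewrite (ab _ ay) in by_.
- lia.
Qed.

Lemma maxdisj_exists (Pts : set V) (s : seq V) (D G : set V) :
  (forall p, Pts p <-> p \in s) ->
  face (conv Pts) G -> G `&` D = set0 ->
  exists M, maxdisj (conv Pts) D M /\ G `<=` M.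
Proof.
move=> hs hG hGD.
pose cnt (H : set V) := count (fun p => `[< H p >]) s.
case: (@exmax (fun k => exists H, face (conv Pts) H /\ H `&` D = set0 /\ G `<=` H /\ cnt H = k) (size s)).
- by exists (cnt G), G; split => //; split => //; split => //.
- by move=> i [H [_ [_ [_ <-]]]]; apply: count_size.
move=> k [[H0 [f0 [d0 [g0 c0]]]] hmax].
exists H0; split => //; split => //; split => //.
move=> H fH dH sH.
have cle : (cnt H0 <= cnt H)%N.
  by apply: sub_count => p /asboolP hp; apply/asboolP; apply: sH.
have cge : (cnt H <= cnt H0)%N.
  rewrite c0; apply: hmax; exists H; do !split => //.
  by apply: subset_trans sH.
have ceq : cnt H0 = cnt H by apply/eqP; rewrite eqn_leq cle cge.
have hpt : forall p, Pts p -> H p -> H0 p.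
  move=> p /hs ps hp.
  have := count_eq_sub (a := fun p => `[< H0 p >]) (b := fun p => `[< H p >]) _ ceq ps.
  move=> h; apply/asboolP; apply: h; last by apply/asboolP.
  by move=> y /asboolP hy; apply/asboolP; apply: sH.
apply/seteqP; split => // x hx.
apply: (face_pts_sub f0).
apply: (conv_mono _ (face_sub_pts fH hx)).
by move=> p [hp hHp]; split => //; apply: hpt.
Qed.


Lemma face_sub (P F : set V) : face P F -> F `<=` P.
Proof. by move=> [c [d [_ ->]]] x []. Qed.

Lemma face_inter (P F G : set V) : face P F -> face P G -> face P (F `&` G).
Proof.
move=> [c1 [d1 [h1 ->]]] [c2 [d2 [h2 ->]]].
have := @face_cap P bool predT (fun b => if b then c1 else c2) (fun b => if b then d1 else d2).
have hv : forall i : bool, predT i -> forall x, P x ->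
   dotp (if i then c1 else c2) x <= (if i then d1 else d2).
  by case => _ x hx; [apply: h1 | apply: h2].
move/(_ hv).
suff -> : [set x | P x /\ dotp c1 x = d1] `&` [set x | P x /\ dotp c2 x = d2] =
  [set x | P x /\ forall i : bool, predT i -> dotp (if i then c1 else c2) x = (if i then d1 else d2)] by [].
apply/seteqP; split => x /=.
  by move=> [[px e1] [_ e2]]; split => // -[].
by move=> [px e]; split; split => //; [exact: (e true) | exact: (e false)].
Qed.

End LinAlg.

Unset Implicit Arguments.

Theorem proposition3p2 (R : realType) (n : nat) (Pz : seq 'rV[int]_n)
  (D : 'I_n -> set 'rV[R]_n) (S1 S2 : set 'rV[R]_n) :
  let Pts : set 'rV[R]_n := [set intpt R z | z in [set z | z \in Pz]] in
  let P := conv Pts in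
  semi_interlaced Pts D ->
  suture Pts D S1 -> suture Pts D S2 ->
  S1 `&` S2 !=set0 ->
  aff (S1 `&` S2) = aff S1 `&` aff S2 ->
  suture Pts D (S1 `&` S2) /\ suture Pts D (P `&` aff (S1 `|` S2)).
Proof.
move=> Pts P [hdau hsemi] [fS1 [ne1 [d1 [I1 [hd1 [me1 c1]]]]]]
  [fS2 [ne2 [d2 [I2 [hd2 [me2 c2]]]]]] [o [o1 o2]] haff.
set s := map (@intpt R n) Pz.
have hs : forall p, Pts p <-> p \in s.
  move=> p; split.
    by move=> [z /= hz <-]; apply: map_f.
  by move=> /mapP [z hz ->]; exists z.
have fS12 : face P (S1 `&` S2) by apply: face_inter.
have dis : forall i (S : set 'rV[R]_n) (I : {set 'I_n}), meets_exactly D S I ->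
    i \notin I -> S `&` D i = set0.
  move=> i S I me hi; apply/seteqP; split => // x [hx hD].
  by move: hi; have := me i; move=> [_ h]; rewrite h //; exists x.
have hM : forall i, exists cd : 'rV[R]_n * R, i \notin I1 :|: I2 ->
   (forall x, P x -> dotp cd.1 x <= cd.2) /\
   (forall x, (S1 `|` S2) x -> dotp cd.1 x = cd.2) /\
   (forall x, P x -> dotp cd.1 x = cd.2 -> ~ D i x).
  move=> i.
  case: (boolP (i \in I1 :|: I2)) => [hi|hi].
    by exists (0, 0).
  move: hi; rewrite !inE negb_or => /andP [n1 n2].
  have [M1 [mM1 sM1]] := maxdisj_exists hs fS1 (dis _ _ _ me1 n1).
  have [M2 [mM2 sM2]] := maxdisj_exists hs fS2 (dis _ _ _ me2 n2).
  have eM : M1 = M2.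
    case: (pselect (M1 = M2)) => // hne.
    have := (proj1 (proj2 (proj2 (hdau i)))) M1 M2 mM1 mM2 hne.
    move/seteqP => [h _]; case: (h o) => //; split; [exact: sM1 | exact: sM2].
  subst M2.
  have [[c [d [hv eM]]] [hMD _]] := mM1.
  exists (c, d) => _ /=; split => //; split.
    move=> x [hx|hx].
      by have := sM1 _ hx; rewrite eM => -[].
    by have := sM2 _ hx; rewrite eM => -[].
  move=> x px ex hD.
  have : (M1 `&` D i) x by split => //; rewrite eM.
  by rewrite hMD.
have [f hf] := choice hM.
pose Z := fun i => i \notin I1 :|: I2.
pose F := [set x | P x /\ forall i, Z i -> dotp (f i).1 x = (f i).2].
have fF : face P F.
  by apply: face_cap => i hi; exact: (proj1 (hf i hi)).
have sF : (S1 `|` S2) `<=` F.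
  move=> x hx; split.
    by case: hx => hx; [apply: (face_sub fS1) | apply: (face_sub fS2)].
  by move=> i hi; apply: (proj1 (proj2 (hf i hi))).
pose K : {set 'I_n} := finset (fun i => `[< D i `&` F !=set0 >]).
pose J : {set 'I_n} := finset (fun i => `[< D i `&` (S1 `&` S2) !=set0 >]).
have meK : meets_exactly D F K by move=> i; rewrite inE asboolE.
have meJ : meets_exactly D (S1 `&` S2) J by move=> i; rewrite inE asboolE.
have KI : K \subset I1 :|: I2.
  apply/fintype.subsetP => i; rewrite inE asboolE => -[x [hD [px hx]]].
  apply/negPn/negP => hi.
  by apply: (proj2 (proj2 (hf i hi))) x px (hx i hi) hD.
have JI : J \subset I1 :&: I2.
  apply/fintype.subsetP => i; rewrite inE asboolE => -[x [hD [x1 x2]]].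
  rewrite !inE; apply/andP; split.
    by apply/(me1 i); exists x.
  by apply/(me2 i); exists x.
have neF : F !=set0 by exists o; apply: sF; left.
have [s0 hs0] := dim_exists (ex_intro _ o (conj o1 o2) : S1 `&` S2 !=set0).
have [f0 hf0] := dim_exists neF.
have [u0 hu0] := dim_exists (ex_intro _ o (or_introl o1) : S1 `|` S2 !=set0).
have sJ := hsemi _ _ _ fS12 (ex_intro _ o (conj o1 o2)) hs0 meJ.
have sK := hsemi _ _ _ fF neF hf0 meK.
have du := dim_union hd1 hd2 hs0 hu0 (ex_intro _ o (conj o1 o2)) haff.
have uf := has_dim_mono sF hu0 hf0.
have cK := subset_leq_card KI.
have cJ := subset_leq_card JI.
have cU := cardsUI I1 I2.
rewrite c1 c2 in cU.
have eJ : #|J| = s0 by lia.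
have eK : #|K| = f0 by lia.
have euf : u0 = f0 by lia.
split.
  split => //; split; first by exists o.
  by exists s0, J.
have eT : P `&` aff (S1 `|` S2) = F.
  apply/seteqP; split => x.
    move=> [px [m [p [w [hp [hw1 ex]]]]]]; split => // i hi.
    rewrite ex dotp_sumr.
    under eq_bigr => j _ do rewrite dotpZr (proj1 (proj2 (hf i hi)) _ (hp j)).
    by rewrite -mulr_suml hw1 mul1r.
  move=> hx; split; first by case: hx.
  have [q [hq [iq sq]]] := dimchar hu0.
  case E: (x - q ord0 <= Mp q)%MS.
    by apply: (row_aff hq).
  have hi := ext_indep iq (negbT E).
  have : (u0.+1 <= f0)%N.
    apply: (proj2 hf0 _ (pext q x)) hi => i.
    by rewrite /pext; case: ifP => _ //; apply: sF.
  by rewrite euf ltnn.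
rewrite eT; split => //; split => //.
by exists f0, K.
Qed.
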